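(* Let $(R,\mathfrak{m})$ be a commutative Artinian local ring with identity, $\mathfrak{m}\neq0$ and $\mathfrak{m}^2=0$. If $|R|>4$ (including the case $R$ infinite), then $L(x^6)=\{2,3,4,6\}$; if $|R|=4$, then $L(x^6)=\{2,4,6\}$.
   Context: A nonunit polynomial in $R[x]$ is irreducible if in any factorization into two polynomials one factor is a unit of $R[x]$. A positive integer $k$ is a length of $f$ if $f$ is a product of $k$ irreducible polynomials of $R[x]$; $L(f)$ denotes the set of lengths of $f$. *)

(* Defs.v *)
From HB Require Import structures.
From mathcomp Require Import all_boot all_order all_algebra.
Set Implicit Arguments. Unset Strict Implicit. Unset Printing Implicit Defensive.
Import GRing.Theory.
Local Open Scope ring_scope.

Definition is_ideal (R : comNzRingType) (I : R -> Prop) : Prop :=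
  I 0 /\ (forall a b, I a -> I b -> I (a - b)) /\ (forall r a, I a -> I (r * a)).

Definition artinian (R : comNzRingType) : Prop :=
  forall I : nat -> R -> Prop,
    (forall n, is_ideal (I n)) ->
    (forall n x, I n.+1 x -> I n x) ->
    exists N, forall n, (N <= n)%N -> forall x, I n x <-> I N x.

(* Local ring: the non-units form an ideal (the unique maximal ideal m). *)
Definition local_ring (R : comUnitRingType) : Prop :=
  is_ideal (fun x : R => x \isn't a GRing.unit).

Definition punit (R : comNzRingType) (f : {poly R}) : Prop :=
  exists g : {poly R}, f * g = 1.

Definition pirreducible (R : comNzRingType) (f : {poly R}) : Prop :=
  ~ punit f /\ forall g h : {poly R}, f = g * h -> punit g \/ punit h.

Definition is_length (R : comNzRingType) (f : {poly R}) (k : nat) : Prop :=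
  (0 < k)%N /\
  exists s : seq {poly R},
    size s = k /\ (forall g, g \in s -> pirreducible g) /\ \prod_(g <- s) g = f.

Definition card_eq (T : eqType) (n : nat) : Prop :=
  exists s : seq T, uniq s /\ size s = n /\ forall x, x \in s.
Definition card_gt (T : eqType) (n : nat) : Prop :=
  exists s : seq T, uniq s /\ (n < size s)%N.

(* Main.v *)
Require Import Defs.
From HB Require Import structures.
From mathcomp Require Import all_boot all_order all_algebra.
From Stdlib Require Import Classical.
From mathcomp Require Import ring.
Set Implicit Arguments. Unset Strict Implicit. Unset Printing Implicit Defensive.
Import GRing.Theory.
Local Open Scope ring_scope.

Definition nu (R : comUnitRingType) (r : R) := r \isn't a GRing.unit.

Lemma nu0 (R : comUnitRingType) : nu (0 : R).
Proof. by rewrite /nu unitr0. Qed.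

Lemma nu1 (R : comUnitRingType) : ~ nu (1 : R).
Proof. by rewrite /nu unitr1. Qed.

Lemma nuB (R : comUnitRingType) : local_ring R -> forall a b : R, nu a -> nu b -> nu (a - b).
Proof. by move=> [_ [H _]]. Qed.

Lemma nuM (R : comUnitRingType) : local_ring R -> forall r a : R, nu a -> nu (r * a).
Proof. by move=> [_ [_ H]]. Qed.

Lemma nuMr (R : comUnitRingType) : local_ring R -> forall r a : R, nu a -> nu (a * r).
Proof. by move=> H r a ha; rewrite mulrC; apply: nuM. Qed.

Lemma nuN (R : comUnitRingType) : local_ring R -> forall a : R, nu a -> nu (- a).
Proof. by move=> H a ha; rewrite -sub0r; apply: nuB => //; apply: nu0. Qed.

Lemma nuD (R : comUnitRingType) : local_ring R -> forall a b : R, nu a -> nu b -> nu (a + b).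
Proof. by move=> H a b ha hb; rewrite -[b]opprK; apply: nuB => //; apply: nuN. Qed.

Lemma unitD (R : comUnitRingType) : local_ring R -> forall u n : R,
  u \is a GRing.unit -> nu n -> (u + n) \is a GRing.unit.
Proof.
move=> H u n hu hn; apply/negPn/negP => h.
have : nu ((u + n) - n) by apply: nuB.
by rewrite addrK /nu hu.
Qed.

Lemma nu_sum (R : comUnitRingType) (I : Type) (r : seq I) (P : pred I) (F : I -> R) :
  local_ring R -> (forall i, P i -> nu (F i)) -> nu (\sum_(i <- r | P i) F i).
Proof.
move=> H hF; apply: (big_ind (fun x => nu x)); first exact: nu0.
  by move=> x y; apply: nuD.
exact: hF.
Qed.

Lemma unit_neq0 (R : comUnitRingType) (u : R) : u \is a GRing.unit -> u != 0.
Proof. by apply: contraTneq => ->; rewrite unitr0. Qed.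
Definition typed (R : comUnitRingType) (e : nat) (f : {poly R}) :=
  f`_e \is a GRing.unit /\ forall i, i != e -> nu f`_i.

Lemma coef_unit_key (R : comUnitRingType) (f g : {poly R}) (k a : nat) :
  local_ring R -> (a <= k)%N -> f`_a \is a GRing.unit -> g`_(k - a) \is a GRing.unit ->
  (forall j, (j <= k)%N -> j != a -> nu f`_j \/ nu g`_(k - j)) ->
  (f * g)`_k \is a GRing.unit.
Proof.
move=> H ak fa ga hj; rewrite coefM.
have ak1 : (a < k.+1)%N by [].
rewrite (bigD1 (Ordinal ak1)) //=.
apply: unitD => //; first by rewrite unitrM fa ga.
apply: nu_sum => // j hja.
have hj' : (j : nat) != a by apply: contra hja => /eqP e; apply/eqP/val_inj.
have jk : (j <= k)%N by rewrite -ltnS ltn_ord.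
case: (hj _ jk hj') => h; [exact: nuMr | exact: nuM].
Qed.

Lemma unit_lt_size (R : comUnitRingType) (f : {poly R}) i :
  f`_i \is a GRing.unit -> (i < size f)%N.
Proof.
move=> h; rewrite ltnNge; apply/negP => hs.
by move: h; rewrite nth_default // unitr0.
Qed.

Lemma typeM (R : comUnitRingType) (f g : {poly R}) (n : nat) :
  local_ring R -> typed n (f * g) ->
  exists a b, typed a f /\ typed b g /\ (a + b = n)%N.
Proof.
move=> H [hn ho].
have exf : exists i, f`_i \is a GRing.unit.
  apply: NNPP => hne; move: hn; rewrite coefM; apply/negP.
  apply: nu_sum => // j _; apply: nuMr => //.
  by rewrite /nu; apply/negP => hu; apply: hne; exists j.
have exg : exists i, g`_i \is a GRing.unit.
  apply: NNPP => hne; move: hn; rewrite coefM; apply/negP.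
  apply: nu_sum => // j _; apply: nuM => //.
  by rewrite /nu; apply/negP => hu; apply: hne; exists (n - j)%N.
have bf : forall i, f`_i \is a GRing.unit -> (i <= size f)%N.
  by move=> i /unit_lt_size /ltnW.
have bg : forall i, g`_i \is a GRing.unit -> (i <= size g)%N.
  by move=> i /unit_lt_size /ltnW.
case: (ex_minnP exf) => a Pa mina.
case: (ex_maxnP exf bf) => a' Pa' maxa'.
case: (ex_minnP exg) => b Pb minb.
case: (ex_maxnP exg bg) => b' Pb' maxb'.
have nuf : forall i, ~~ (f`_i \is a GRing.unit) -> nu f`_i by [].
have eq1 : (a + b = n)%N.
  apply/eqP; apply: contraT => hne.
  have : (f * g)`_(a + b) \is a GRing.unit.
    apply: (@coef_unit_key _ _ _ _ a) => //; first exact: leq_addr.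
      by rewrite addKn.
    move=> j jk ja; case: (ltngtP j a) => hja.
    - by left; apply/negP => /mina; rewrite leqNgt hja.
    - right; apply/negP => /minb; rewrite leqNgt.
      by rewrite -(ltn_add2l j) subnKC // ltn_add2r hja.
    - by rewrite hja eqxx in ja.
  by move: (ho _ hne); rewrite /nu => /negP.
have eq2 : (a' + b' = n)%N.
  apply/eqP; apply: contraT => hne.
  have : (f * g)`_(a' + b') \is a GRing.unit.
    apply: (@coef_unit_key _ _ _ _ a') => //; first exact: leq_addr.
      by rewrite addKn.
    move=> j jk ja; case: (ltngtP j a') => hja.
    - right; apply/negP => /maxb'; rewrite leqNgt.
      by rewrite -(ltn_add2l j) subnKC // ltn_add2r hja.
    - by left; apply/negP => /maxa'; rewrite leqNgt hja.
    - by rewrite hja eqxx in ja.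
  by move: (ho _ hne); rewrite /nu => /negP.
have aa : a' = a.
  have h1 := mina _ Pa'; have h2 := minb _ Pb'.
  apply/eqP; rewrite eqn_leq h1 andbT.
  by rewrite -(leq_add2r b') eq2 -eq1 leq_add2l.
have bb : b' = b.
  have h1 := mina _ Pa'; have h2 := minb _ Pb'.
  apply/eqP; rewrite eqn_leq h2 andbT.
  by rewrite -(leq_add2l a') eq2 aa -eq1.
exists a, b; split; last split => //.
  split => // i hi; case: (ltngtP i a) => hia.
  - by apply/negP => /mina; rewrite leqNgt hia.
  - by apply/negP => /maxa'; rewrite aa leqNgt hia.
  - by rewrite hia eqxx in hi.
split => // i hi; case: (ltngtP i b) => hib.
- by apply/negP => /minb; rewrite leqNgt hib.
- by apply/negP => /maxb'; rewrite bb leqNgt hib.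
- by rewrite hib eqxx in hi.
Qed.
Definition mm (R : comUnitRingType) := forall a b : R, nu a -> nu b -> a * b = 0.

Definition ty (R : comUnitRingType) (f : {poly R}) : nat :=
  find (fun c : R => c \is a GRing.unit) f.

Lemma typed_uniq (R : comUnitRingType) (f : {poly R}) a b :
  typed a f -> typed b f -> a = b.
Proof.
move=> [ha _] [_ hb]; apply/eqP; apply: contraT => hne.
by move: (hb _ hne); rewrite /nu ha.
Qed.

Lemma typed_ty (R : comUnitRingType) (f : {poly R}) n : typed n f -> ty f = n.
Proof.
move=> [hn ho].
have hs : has (fun c : R => c \is a GRing.unit) f.
  by apply/hasP; exists f`_n => //; apply: mem_nth; apply: unit_lt_size.
have h1 := nth_find 0 hs.
have h2 := @before_find _ 0 (fun c : R => c \is a GRing.unit) f n.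
rewrite /ty; case: (ltngtP (find (fun c : R => c \is a GRing.unit) f) n) => h //.
- by move: (ho _ (negbT (ltn_eqF h))); rewrite /nu h1.
- by move: (h2 h) => /=; rewrite hn.
Qed.

Lemma nu_poly_mul0 (R : comUnitRingType) (p q : {poly R}) : mm R ->
  (forall i, nu p`_i) -> (forall i, nu q`_i) -> p * q = 0.
Proof.
move=> hm hp hq; apply/polyP => i; rewrite coefM coef0 big1 // => j _.
exact: hm.
Qed.

Lemma typed1 (R : comUnitRingType) : typed 1 ('X : {poly R}).
Proof.
split; first by rewrite coefX eqxx unitr1.
move=> i hi; rewrite coefX (negbTE hi); exact: nu0.
Qed.

Lemma typed_one (R : comUnitRingType) : typed 0 (1 : {poly R}).
Proof.
split; first by rewrite coef1 eqxx unitr1.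
move=> i hi; rewrite coef1 (negbTE hi); exact: nu0.
Qed.

Lemma typed0_punit (R : comUnitRingType) (f : {poly R}) :
  local_ring R -> mm R -> typed 0 f -> punit f.
Proof.
move=> H hm [hu ho].
set u := f`_0.
set n := f - u%:P.
have hn : forall i, nu n`_i.
  move=> i; rewrite /n coefB coefC; case: eqP => [->|/eqP hi].
    by rewrite subrr; apply: nu0.
  by rewrite subr0; apply: ho.
have hnn : n * n = 0 by apply: nu_poly_mul0.
set v := (u^-1)%:P.
have hv : u%:P * v = 1 by rewrite /v -polyCM mulrV // polyC1.
have hf : f = u%:P + n by rewrite /n addrC subrK.
exists (v * (1 - v * n)).
have -> : f * (v * (1 - v * n)) = u%:P * v + (1 - u%:P * v) * (v * n) - v * v * (n * n).
  rewrite hf; ring.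
by rewrite hv hnn subrr mul0r mulr0 subr0 addr0.
Qed.

Lemma punit_typed (R : comUnitRingType) (f : {poly R}) e :
  local_ring R -> typed e f -> punit f -> e = 0%N.
Proof.
move=> H he [g hg].
have := typed_one R; rewrite -hg => /typeM [] // a [b [ha [_ hab]]].
rewrite (typed_uniq he ha).
by move: hab; case: (a) => //; case: b.
Qed.

Lemma pirr_crit (R : comUnitRingType) (f : {poly R}) e :
  local_ring R -> mm R -> typed e f -> (0 < e)%N ->
  (e == 1%N) || (f`_0 != 0) -> pirreducible f.
Proof.
move=> H hm he e0 hc; split.
  by move=> /(punit_typed H he) h; rewrite h in e0.
move=> g h hgh.
have := he; rewrite hgh => /typeM [] // a [b [ha [hb hab]]].
move: ha hab; case: a => [|a] ha hab; first by left; apply: typed0_punit.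
move: hb hab; case: b => [|b] hb hab; first by right; apply: typed0_punit.
exfalso; move: hc; rewrite -hab addSn addnS /= hgh.
rewrite coefM big_ord1 subnn.
by rewrite hm ?eqxx //; [apply: ha.2 | apply: hb.2].
Qed.

Lemma irr_coef0 (R : comUnitRingType) (f : {poly R}) e :
  local_ring R -> mm R -> pirreducible f -> typed e f -> (2 <= e)%N -> f`_0 != 0.
Proof.
move=> H hm [hnu hirr] he e2; apply/negP => /eqP f0.
have ht : take_poly 1 f = 0.
  apply/polyP => i; rewrite coef_take_poly coef0; case: i => //=.
have hd : f = drop_poly 1 f * 'X by rewrite -{1}(poly_take_drop 1 f) ht add0r expr1.
case: (hirr _ _ hd) => hp.
  have := he; rewrite hd => /typeM [] // a [b [ha [hb hab]]].
  have b1 := typed_uniq hb (typed1 R); subst b.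
  have a0 := punit_typed H ha hp; subst a.
  by rewrite -hab in e2.
by have := punit_typed H (typed1 R) hp.
Qed.
Lemma prod_typed (R : comUnitRingType) (s : seq {poly R}) n :
  local_ring R -> typed n (\prod_(f <- s) f) ->
  (forall f, f \in s -> typed (ty f) f) /\ ((\sum_(f <- s) ty f)%N = n).
Proof.
move=> H; elim: s n => [|f s IH] n.
  rewrite big_nil => hn; split => //.
  by rewrite big_nil (typed_uniq (typed_one R) hn).
rewrite big_cons => /typeM [] // a [b [ha [hb hab]]].
have [IH1 IH2] := IH _ hb.
have tf := typed_ty ha.
split; last by rewrite big_cons tf IH2.
move=> g; rewrite inE => /orP [/eqP ->|hg]; first by rewrite tf.
exact: IH1.
Qed.

Definition cf (R : comUnitRingType) (f : {poly R}) := f`_(ty f).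
Definition mp (R : comUnitRingType) (f : {poly R}) := (cf f)^-1 *: f - 'X^(ty f).

Lemma mp_nu (R : comUnitRingType) (f : {poly R}) :
  local_ring R -> typed (ty f) f -> forall i, nu (mp f)`_i.
Proof.
move=> H [hu ho] i; rewrite /mp coefB coefZ coefXn.
case: eqP => [->|/eqP hi]; first by rewrite mulVr // subrr; apply: nu0.
by rewrite subr0; apply: nuM => //; apply: ho.
Qed.

Lemma f_decomp (R : comUnitRingType) (f : {poly R}) :
  typed (ty f) f -> f = cf f *: ('X^(ty f) + mp f).
Proof.
move=> [hu _]; rewrite /mp addrC subrK scalerA mulrV // scale1r //.
Qed.

Lemma le_sum_mem (T : eqType) (F : T -> nat) (s : seq T) x :
  x \in s -> (F x <= \sum_(i <- s) F i)%N.
Proof.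
elim: s => // y s IH; rewrite inE big_cons => /orP [/eqP ->|h].
  exact: leq_addr.
by apply: leq_trans (IH h) _; apply: leq_addl.
Qed.

Lemma nu_polysum (R : comUnitRingType) (s : seq {poly R}) (F : {poly R} -> {poly R}) :
  local_ring R -> (forall g, g \in s -> forall i, nu (F g)`_i) ->
  forall i, nu (\sum_(g <- s) F g)`_i.
Proof.
move=> H hF i; rewrite coef_sum big_seq; apply: nu_sum => // g hg.
exact: hF.
Qed.

Lemma prod_formula (R : comUnitRingType) (s : seq {poly R}) :
  local_ring R -> mm R -> (forall f, f \in s -> typed (ty f) f) ->
  \prod_(f <- s) f = (\prod_(f <- s) cf f) *:
     ('X^(\sum_(f <- s) ty f)%N + \sum_(f <- s) mp f * 'X^((\sum_(g <- s) ty g)%N - ty f)).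
Proof.
move=> H hm; elim: s => [|f s IH] hs.
  by rewrite !big_nil expr0 addr0 scale1r.
have hf : typed (ty f) f by apply: hs; rewrite inE eqxx.
have hs' : forall g, g \in s -> typed (ty g) g.
  by move=> g hg; apply: hs; rewrite inE hg orbT.
rewrite !big_cons IH // {1}(f_decomp hf) -scalerAl -scalerAr scalerA.
congr (_ *: _).
set N := (\sum_(g <- s) ty g)%N.
set S := \sum_(g <- s) mp g * 'X^(N - ty g).
have hSnu : forall i, nu S`_i.
  apply: nu_polysum => // g hg i; rewrite coefMXn.
  by case: ifP => _; [apply: nu0 | apply: mp_nu => //; apply: hs'].
have hmS : mp f * S = 0 by apply: nu_poly_mul0 => //; apply: mp_nu.
have hXS : 'X^(ty f) * S = \sum_(g <- s) mp g * 'X^(ty f + N - ty g).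
  rewrite /S mulr_sumr; apply: eq_big_seq => g hg.
  rewrite -addnBA; last exact: le_sum_mem.
  by rewrite exprD mulrCA.
rewrite addKn -hXS.
have -> : ('X^(ty f) + mp f) * ('X^N + S) =
   'X^(ty f) * 'X^N + 'X^(ty f) * S + mp f * 'X^N + mp f * S by ring.
rewrite hmS exprD; ring.
Qed.

Lemma key_sum (R : comUnitRingType) (s : seq {poly R}) n E :
  local_ring R -> mm R -> \prod_(f <- s) f = 'X^n ->
  (2 <= E)%N -> (E <= n)%N -> (forall f, f \in s -> ty f <= E)%N ->
  \sum_(f <- s | ty f == E) (mp f)`_0 = 0.
Proof.
move=> H hm hp E2 En hle.
have tn : typed n ('X^n : {poly R}).
  split; first by rewrite coefXn eqxx unitr1.
  by move=> i hi; rewrite coefXn (negbTE hi); apply: nu0.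
have [hs hsum] := prod_typed H (eq_ind_r (fun p => typed n p) tn hp).
have hf := prod_formula H hm hs; rewrite hp hsum in hf.
set C := \prod_(f <- s) cf f in hf.
have hC : C \is a GRing.unit.
  rewrite /C big_seq; apply: (big_ind (fun x : R => x \is a GRing.unit)).
    - exact: unitr1.
    - by move=> x y hx hy; rewrite unitrM hx hy.
  - by move=> g hg; exact: (hs g hg).1.
set S := \sum_(f <- s) _ in hf.
have jn : (n - E != n)%N.
  by rewrite neq_ltn; apply/orP; left; rewrite ltn_subrL (leq_trans _ E2) //= (leq_trans _ En) // (leq_trans _ E2).
have hSj : S`_(n - E) = 0.
  have := congr1 (fun p : {poly R} => p`_(n - E)) hf.
  rewrite /= coefZ coefD !coefXn (negbTE jn) add0r => /esym h.
  by rewrite -[S`_(n - E)](mulKr hC) h mulr0.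
rewrite -[RHS]hSj /S coef_sum big_mkcond; apply: eq_big_seq => g hg /=.
rewrite coefMXn; case: eqP => [->|/eqP hne].
  by rewrite ltnn subnn.
have hlt : (ty g < E)%N by rewrite ltn_neqAle hne hle.
rewrite ltn_sub2l //; apply: leq_trans hlt En.
Qed.
Fixpoint comps (fuel n : nat) : seq (seq nat) :=
  match fuel with
  | 0 => if n == 0%N then [:: [::]] else [::]
  | fu.+1 => if n == 0%N then [:: [::]] else
      flatten [seq [seq e :: t | t <- comps fu (n - e)] | e <- iota 1 n]
  end.

Lemma comps_complete fuel : forall es n, all (fun e => 0 < e)%N es -> sumn es = n ->
  (size es <= fuel)%N -> es \in comps fuel n.
Proof.
elim: fuel => [|fu IH] [|e t] n //=.
- by move=> _ <-; rewrite inE.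
- by move=> _ <-; rewrite inE.
- move=> /andP [e0 ht] hn hs.
  have -> : (n == 0%N) = false by rewrite -hn; move: e0; case: (e).
  apply/flatten_mapP; exists e.
    by rewrite mem_iota e0 /= -hn add1n ltnS leq_addr.
  apply: map_f; apply: IH => //.
  by rewrite -hn addKn.
Qed.

Definition goodE1 (es : seq nat) (E : nat) :=
  ~~ all (fun e => e <= E)%N es || (count (pred1 E) es != 1%N).
Definition goodE2 (es : seq nat) (E : nat) :=
  ~~ all (fun e => e <= E)%N es || ((count (pred1 E) es != 1%N) && (count (pred1 E) es != 3%N)).
Definition Q1 (es : seq nat) := all (goodE1 es) (iota 2 5) ==> (size es \in [:: 2; 3; 4; 6]%N).
Definition Q2 (es : seq nat) := all (goodE2 es) (iota 2 5) ==> (size es \in [:: 2; 4; 6]%N).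

Lemma allQ1 : all Q1 (comps 6 6).
Proof. by vm_compute. Qed.
Lemma allQ2 : all Q2 (comps 6 6).
Proof. by vm_compute. Qed.

Lemma size_le_sumn (es : seq nat) : all (fun e => 0 < e)%N es -> (size es <= sumn es)%N.
Proof.
elim: es => //= e t IH /andP [e0 ht].
by rewrite -add1n leq_add //; apply: IH.
Qed.
Definition beta (R : comUnitRingType) (f : {poly R}) := (mp f)`_0.

Lemma fwd (R : comUnitRingType) (s : seq {poly R}) :
  local_ring R -> mm R -> (forall f, f \in s -> pirreducible f) ->
  \prod_(f <- s) f = 'X^6 ->
  [/\ all (fun e => 0 < e)%N (map (@ty R) s), sumn (map (@ty R) s) = 6%N &
    forall E, (2 <= E <= 6)%N -> all (fun e => e <= E)%N (map (@ty R) s) ->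
     exists2 t : seq {poly R}, size t = count (pred1 E) (map (@ty R) s) &
       \sum_(g <- t) beta g = 0 /\ forall g, g \in t -> beta g != 0 /\ nu (beta g)].
Proof.
move=> H hm hirr hp.
have tn : typed 6 ('X^6 : {poly R}).
  split; first by rewrite coefXn eqxx unitr1.
  by move=> i hi; rewrite coefXn (negbTE hi); apply: nu0.
have [hs hsum] := prod_typed H (eq_ind_r (fun p => typed 6 p) tn hp).
split.
- apply/allP => e /mapP [f hf ->]; rewrite lt0n; apply/negP => /eqP h0.
  have := hs f hf; rewrite h0 => /(typed0_punit H hm) hu.
  by case: (hirr f hf).
- by rewrite -hsum sumnE big_map.
move=> E /andP [E2 E6] hall.
exists [seq g <- s | ty g == E]; first by rewrite size_filter count_map.
split.
  rewrite big_filter; apply: (key_sum H hm hp) => // f hf.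
  by move/allP: hall; apply; apply: map_f.
move=> g; rewrite mem_filter => /andP [/eqP hE hg].
have [hu ho] := hs g hg.
have hb : beta g = (cf g)^-1 * g`_0.
  rewrite /beta /mp coefB coefZ coefXn hE; move: E2; case: (E) => [|E0] // _; by rewrite subr0.
have g0 : g`_0 != 0 by apply: (irr_coef0 H hm (hirr g hg) (hs g hg)); rewrite hE.
have n0 : nu g`_0 by apply: ho; rewrite hE; move: E2; case: (E).
rewrite hb; split; last exact: nuM.
apply: contra g0 => /eqP h0.
by rewrite -[g`_0](mulVKr hu) h0 mulr0.
Qed.
Lemma unit_neq_nu (R : comUnitRingType) (u v : R) :
  u \is a GRing.unit -> nu v -> u != v.
Proof. by move=> hu hv; apply: contraTneq hv => <-; rewrite /nu hu. Qed.

Lemma five_distinct (R : comUnitRingType) (x y z : R) :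
  local_ring R -> card_eq R 4 -> nu x -> nu y -> nu z ->
  x != y -> x != z -> y != z -> False.
Proof.
move=> H [s [us [ss hs]]] hx hy hz xy xz yz.
have ux : (1 + x) \is a GRing.unit by apply: unitD => //; exact: unitr1.
have uy : (1 + y) \is a GRing.unit by apply: unitD => //; exact: unitr1.
have u5 : uniq [:: x; y; z; 1 + x; 1 + y].
  rewrite /= !inE !negb_or xy xz yz /=.
  rewrite ![x == 1 + _]eq_sym ![y == 1 + _]eq_sym ![z == 1 + _]eq_sym.
  rewrite (unit_neq_nu ux hx) (unit_neq_nu ux hy) (unit_neq_nu ux hz).
  rewrite (unit_neq_nu uy hx) (unit_neq_nu uy hy) (unit_neq_nu uy hz) /=.
  rewrite andbT; apply: contra xy => /eqP /addrI ->; by [].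
have := uniq_leq_size u5 (fun w _ => hs w).
by rewrite ss.
Qed.

Lemma three_sum (R : comUnitRingType) (b1 b2 b3 : R) :
  local_ring R -> card_eq R 4 -> nu b1 -> nu b2 -> nu b3 ->
  b1 != 0 -> b2 != 0 -> b3 != 0 -> b1 + b2 + b3 = 0 -> False.
Proof.
move=> H hc h1 h2 h3 n1 n2 n3 hsum.
have z0 := nu0 R.
case: (eqVneq b1 b2) => [e12|ne12]; last first.
  by apply: (five_distinct H hc z0 h1 h2); rewrite // eq_sym.
case: (eqVneq b1 b3) => [e13|ne13]; last first.
  by apply: (five_distinct H hc z0 h1 h3); rewrite // eq_sym.
subst b2 b3.
have hbb : nu (b1 + b1) by apply: nuD.
case: (eqVneq (b1 + b1) 0) => [e0|ne0].
  by move: hsum; rewrite e0 add0r; apply/eqP.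
apply: (five_distinct H hc z0 h1 hbb).
- by rewrite eq_sym.
- by rewrite eq_sym.
apply/negP => /eqP e; move: n1; rewrite -{1}[b1]addr0 in e.
by move/addrI: e => <-; rewrite eqxx.
Qed.

Lemma exists_b (R : comUnitRingType) (a : R) :
  local_ring R -> card_gt R 4 -> nu a -> a != 0 ->
  exists b : R, [/\ nu b, b != 0 & a + b != 0].
Proof.
move=> H [s [us ss]] ha a0.
apply: NNPP => hne.
have hb : forall b : R, nu b -> b = 0 \/ b = - a.
  move=> b hb; case: (eqVneq b 0) => [->|b0]; first by left.
  case: (eqVneq (a + b) 0) => [e|e]; last by exfalso; apply: hne; exists b.
  by right; rewrite -(addKr a b) e addr0.
have hr : forall r : R, r \in [:: 0; - a; -1; -1 - a].
  move=> r; rewrite !inE.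
  have hra : nu (r * a) by apply: nuM.
  case: (hb _ hra) => e.
    have nr : nu r.
      apply/negP => ur; move: a0; rewrite -[a](mulKr ur) e mulr0 eqxx //.
    by case: (hb _ nr) => ->; rewrite eqxx ?orbT.
  have nr : nu (r + 1).
    apply/negP => ur; move: a0.
    have : (r + 1) * a = 0 by rewrite mulrDl e mul1r addNr.
    by move=> e2; rewrite -[a](mulKr ur) e2 mulr0 eqxx.
  case: (hb _ nr) => e2.
    have -> : r = -1 by rewrite -(addrK 1 r) e2 sub0r.
    by rewrite eqxx !orbT.
  have -> : r = -1 - a by rewrite -(addrK 1 r) e2 addrC.
  by rewrite eqxx !orbT.
have := uniq_leq_size us (fun w _ => hr w).
by rewrite leqNgt ss.
Qed.

Lemma typed_XnC (R : comUnitRingType) (n : nat) (a : R) :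
  (0 < n)%N -> nu a -> typed n ('X^n + a%:P).
Proof.
move=> n0 ha; split.
  by rewrite coefD coefXn coefC eqxx; case: n n0 => //= n _; rewrite addr0 unitr1.
move=> i hi; rewrite coefD coefXn coefC (negbTE hi) add0r.
by case: (i == 0%N) => //; apply: nu0.
Qed.

Lemma irr_XnC (R : comUnitRingType) (n : nat) (a : R) :
  local_ring R -> mm R -> (0 < n)%N -> nu a -> a != 0 -> pirreducible ('X^n + a%:P).
Proof.
move=> H hm n0 ha a0; apply: (pirr_crit H hm (typed_XnC n0 ha)) => //.
rewrite coefD coefXn coefC /=; case: n n0 => // n _ /=.
by rewrite add0r a0 orbT.
Qed.

Lemma irr_X (R : comUnitRingType) :
  local_ring R -> mm R -> pirreducible ('X : {poly R}).
Proof. by move=> H hm; apply: (pirr_crit H hm (typed1 R)). Qed.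

Lemma CC0 (R : comUnitRingType) (a b : R) : mm R -> nu a -> nu b -> a%:P * b%:P = 0.
Proof. by move=> hm ha hb; rewrite -polyCM hm // polyC0. Qed.

Lemma len6 (R : comUnitRingType) : local_ring R -> mm R -> is_length ('X^6 : {poly R}) 6.
Proof.
move=> H hm; split => //; exists [:: 'X; 'X; 'X; 'X; 'X; 'X]; split => //; split.
  by move=> g; rewrite !inE !orbb => /eqP ->; apply: irr_X.
rewrite !big_cons big_nil; ring.
Qed.

Lemma len4 (R : comUnitRingType) (a : R) : local_ring R -> mm R -> nu a -> a != 0 ->
  is_length ('X^6 : {poly R}) 4.
Proof.
move=> H hm ha a0.
have ha' : nu (- a) by apply: nuN.
have a0' : - a != 0 by rewrite oppr_eq0.
split => //; exists [:: 'X; 'X; 'X^2 + a%:P; 'X^2 + (- a)%:P]; split => //; split.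
  move=> g; rewrite !inE orbA orbb => /orP [/eqP ->|/orP [/eqP ->|/eqP ->]].
  - exact: irr_X.
  - exact: irr_XnC.
  - exact: irr_XnC.
rewrite !big_cons big_nil.
have hAB := CC0 hm ha ha'.
have hApB : a%:P + (- a)%:P = 0 :> {poly R} by rewrite -polyCD addrN polyC0.
transitivity ('X^6 + (a%:P + (- a)%:P) * 'X^4 + a%:P * (- a)%:P * 'X^2 : {poly R}).
  ring.
by rewrite hAB hApB !mul0r !addr0.
Qed.

Lemma len2 (R : comUnitRingType) (a : R) : local_ring R -> mm R -> nu a -> a != 0 ->
  is_length ('X^6 : {poly R}) 2.
Proof.
move=> H hm ha a0.
have ha' : nu (- a) by apply: nuN.
have a0' : - a != 0 by rewrite oppr_eq0.
split => //; exists [:: 'X^3 + a%:P; 'X^3 + (- a)%:P]; split => //; split.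
  move=> g; rewrite !inE => /orP [/eqP ->|/eqP ->]; exact: irr_XnC.
rewrite !big_cons big_nil.
have hAB := CC0 hm ha ha'.
have hApB : a%:P + (- a)%:P = 0 :> {poly R} by rewrite -polyCD addrN polyC0.
transitivity ('X^6 + (a%:P + (- a)%:P) * 'X^3 + a%:P * (- a)%:P : {poly R}).
  ring.
by rewrite hAB hApB !mul0r !addr0.
Qed.

Lemma len3 (R : comUnitRingType) (a b : R) : local_ring R -> mm R -> nu a -> a != 0 ->
  nu b -> b != 0 -> a + b != 0 -> is_length ('X^6 : {poly R}) 3.
Proof.
move=> H hm ha a0 hb b0 ab0.
set c := - (a + b).
have hc : nu c by apply: nuN => //; apply: nuD.
have c0 : c != 0 by rewrite oppr_eq0.
split => //; exists [:: 'X^2 + a%:P; 'X^2 + b%:P; 'X^2 + c%:P]; split => //; split.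
  move=> g; rewrite !inE => /orP [/eqP ->|/orP [/eqP ->|/eqP ->]]; exact: irr_XnC.
rewrite !big_cons big_nil.
have hAB := CC0 hm ha hb.
have hAC := CC0 hm ha hc.
have hBC := CC0 hm hb hc.
have hS : a%:P + b%:P + c%:P = 0 :> {poly R} by rewrite -!polyCD /c addrN polyC0.
transitivity ('X^6 + (a%:P + b%:P + c%:P) * 'X^4 +
   (a%:P * b%:P + a%:P * c%:P + b%:P * c%:P) * 'X^2 + a%:P * b%:P * c%:P : {poly R}).
  ring.
by rewrite hAB hAC hBC hS !mul0r !addr0 mul0r addr0.
Qed.

Lemma es_facts (R : comUnitRingType) (k : nat) : local_ring R -> mm R ->
  is_length ('X^6 : {poly R}) k ->
  exists es : seq nat, [/\ size es = k, es \in comps 6 6 &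
    forall E, (2 <= E <= 6)%N -> all (fun e => e <= E)%N es ->
     exists2 t : seq {poly R}, size t = count (pred1 E) es &
       \sum_(g <- t) beta g = 0 /\ forall g, g \in t -> beta g != 0 /\ nu (beta g)].
Proof.
move=> H hm [k0 [s [hs [hirr hp]]]].
have [h0 hsum hE] := fwd H hm hirr hp.
exists (map (@ty R) s); split => //; first by rewrite size_map.
apply: comps_complete => //.
by rewrite -hsum; apply: size_le_sumn.
Qed.

Theorem lemma4p10 (R : comUnitRingType) :
  artinian R -> local_ring R ->
  (exists a : R, a \isn't a GRing.unit /\ a != 0) ->
  (forall a b : R, a \isn't a GRing.unit -> b \isn't a GRing.unit -> a * b = 0) ->
  (card_gt R 4 -> forall k, is_length ('X^6 : {poly R}) k <-> k \in [:: 2; 3; 4; 6]%N) /\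
  (card_eq R 4 -> forall k, is_length ('X^6 : {poly R}) k <-> k \in [:: 2; 4; 6]%N).
Proof.
move=> _ H [a [ha a0]] hm0.
have hm : mm R := hm0.
split.
- move=> hgt k; split.
    move=> /(es_facts H hm) [es [<- hc hE]].
    have := allP allQ1 _ hc; rewrite /Q1 => /implyP; apply.
    apply/allP => E; rewrite mem_iota => /andP [E2 E7].
    rewrite /goodE1; case hal: (all _ es) => //=.
    have [t ht [hsum hnz]] := hE E (introT andP (conj E2 E7)) hal.
    apply/negP => /eqP h1; rewrite h1 in ht.
    case: t ht hsum hnz => [|g [|]] // _; rewrite big_seq1 => hg hnz.
    by have := (hnz g (mem_head _ _)).1; rewrite hg eqxx.
  rewrite !inE => /orP [/eqP ->|/orP [/eqP ->|/orP [/eqP ->|/eqP ->]]].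
  - exact: (len2 H hm ha a0).
  - have [b [hb b0 ab0]] := exists_b H hgt ha a0.
    exact: (len3 H hm ha a0 hb b0 ab0).
  - exact: (len4 H hm ha a0).
  - exact: (len6 H hm).
- move=> heq k; split.
    move=> /(es_facts H hm) [es [<- hc hE]].
    have := allP allQ2 _ hc; rewrite /Q2 => /implyP; apply.
    apply/allP => E; rewrite mem_iota => /andP [E2 E7].
    rewrite /goodE2; case hal: (all _ es) => //=.
    have [t ht [hsum hnz]] := hE E (introT andP (conj E2 E7)) hal.
    apply/andP; split; apply/negP => /eqP h1; rewrite h1 in ht.
      case: t ht hsum hnz => [|g [|]] // _; rewrite big_seq1 => hg hnz.
      by have := (hnz g (mem_head _ _)).1; rewrite hg eqxx.
    case: t ht hsum hnz => [|x [|y [|z [|]]]] // _.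
    rewrite !big_cons big_nil addr0 addrA => hs hnz.
    have [x0 xn] := hnz x (mem_head _ _).
    have [y0 yn] : beta y != 0 /\ nu (beta y) by apply: hnz; rewrite !inE eqxx orbT.
    have [z0 zn] : beta z != 0 /\ nu (beta z) by apply: hnz; rewrite !inE eqxx !orbT.
    exact: (three_sum H heq xn yn zn x0 y0 z0 hs).
  rewrite !inE => /orP [/eqP ->|/orP [/eqP ->|/eqP ->]].
  - exact: (len2 H hm ha a0).
  - exact: (len4 H hm ha a0).
  - exact: (len6 H hm).
Qed.
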